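(* Let $X$ and $\tilde X$ be entrywise nonnegative real symmetric matrices such that $I\succeq X$, $I\succeq\tilde X$, and $I-\tilde X\approx_\epsilon I-\tfrac12X-\tfrac12X^2$. If $\rho(X)\le 1-\lambda$, then all eigenvalues of $\tilde X$ lie between $1-\tfrac12(3-\lambda)e^{\epsilon}$ and $1-\tfrac12(3\lambda-\lambda^2)e^{-\epsilon}$.
   Context: $\rho$ denotes spectral radius; $\succeq$ is the Loewner order; $A\approx_\epsilon B$ means $e^{\epsilon}A\succeq B\succeq e^{-\epsilon}A$. *)

(* Defs.v *)
From mathcomp Require Import all_boot all_order all_algebra.
From mathcomp Require Import reals sequences exp.
From mathcomp Require Import complex.
Set Implicit Arguments. Unset Strict Implicit. Unset Printing Implicit Defensive.
Import Order.TTheory GRing.Theory Num.Theory.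
Local Open Scope ring_scope.

Definition psd (R : realType) (n : nat) (A : 'M[R]_n) : Prop :=
  forall v : 'cV[R]_n, 0 <= (v^T *m A *m v) 0 0.

Definition loewner_ge (R : realType) (n : nat) (A B : 'M[R]_n) : Prop :=
  psd (A - B).

Definition approx_eps (R : realType) (n : nat) (eps : R) (A B : 'M[R]_n) : Prop :=
  loewner_ge (expR eps *: A) B /\ loewner_ge B (expR (- eps) *: A).

Definition symmetric_mx (R : realType) (n : nat) (A : 'M[R]_n) : Prop :=
  A^T = A.

Definition nonneg_mx (R : realType) (n : nat) (A : 'M[R]_n) : Prop :=
  forall i j, 0 <= A i j.

Definition spectral_radius_le (R : realType) (n : nat) (A : 'M[R]_n) (r : R) : Prop :=
  forall z : R[i], eigenvalue (map_mx (fun x : R => (x%:C)%C) A) z -> `|z| <= (r%:C)%C.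

(* Main.v *)
Require Import Defs.
From mathcomp Require Import all_boot all_order all_algebra.
From mathcomp Require Import reals sequences exp.
From mathcomp Require Import complex.
From mathcomp Require Import ring lra.
Import Order.TTheory GRing.Theory Num.Theory.
Local Open Scope ring_scope.
Section S.
Variable R : realType.
Local Notation C := (R[i]).
Local Notation toC := (real_complex R).

Lemma normC_real (x : R) : `|toC x| = toC `|x|.
Proof. by rewrite normc_def /= expr0n addr0 sqrtr_sqr. Qed.

Lemma spec_facts n (X : 'M[R]_n) r : symmetric_mx X -> spectral_radius_le X r ->
  let Xc := map_mx toC X in
  let P := spectralmx Xc in let d := spectral_diag Xc in
  [/\ Xc = map_mx Num.Def.conjC P^T *m diag_mx d *m P, P *m map_mx Num.Def.conjC P^T = 1%:M,
      map_mx Num.Def.conjC P^T *m P = 1%:M &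
      forall j, d 0 j = toC (complex.Re (d 0 j)) /\ `|complex.Re (d 0 j)| <= r].
Proof.
move=> Xs Xr Xc P d.
have Xh : Xc \is hermsymmx.
  apply/is_hermitianmxP; rewrite expr0 scale1r.
  apply/matrixP => i j; rewrite !mxE conj_Creal ?complex_real //.
  by rewrite -{1}Xs mxE.
have Pu : P \is unitarymx by apply: spectral_unitarymx.
have PP : P *m map_mx Num.Def.conjC P^T = 1%:M by apply/unitarymxP.
have Pinv : invmx P = map_mx Num.Def.conjC P^T by apply: invmx_unitary.
have XcE : Xc = map_mx Num.Def.conjC P^T *m diag_mx d *m P.
  rewrite -Pinv; apply/orthomx_spectralP; exact: hermitian_normalmx.
have PP' : map_mx Num.Def.conjC P^T *m P = 1%:M.
  by rewrite -Pinv mulVmx // spectral_unit.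
split => // j.
have dr := hermitian_spectral_diag_real Xh.
have /complex_realP [x dx] : d 0 j \is Num.real by move/mxOverP: dr; apply.
rewrite dx /=; split => //.
have ev : eigenvalue Xc (d 0 j).
  apply/eigenvalueP; exists (row j P).
    rewrite -row_mul XcE !mulmxA PP mul1mx mul_diag_mx.
    by apply/rowP => k; rewrite !mxE.
  apply/negP => /eqP rj0.
  have := congr1 (mulmx ^~ (invmx P)) rj0.
  rewrite rowE -mulmxA mulmxV ?spectral_unit // mulmx1 mul0mx.
  by move=> /matrixP/(_ 0 j); rewrite !mxE !eqxx /= => /eqP; rewrite oner_eq0.
have := Xr _ ev; rewrite dx normC_real lecR //.
Qed.

Lemma quad_bound n (X : 'M[R]_n) r (u : 'cV[R]_n) : symmetric_mx X -> spectral_radius_le X r ->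
  (1 - 2^-1 * r - 2^-1 * r ^+ 2) * (u^T *m u) 0 0
    <= (u^T *m (1%:M - 2^-1 *: X - 2^-1 *: (X *m X)) *m u) 0 0 /\
  (u^T *m (1%:M - 2^-1 *: X - 2^-1 *: (X *m X)) *m u) 0 0 <= (1 + 2^-1 * r) * (u^T *m u) 0 0.
Proof.
move=> Xs Xr.
have := @spec_facts n X r Xs Xr; cbv zeta; case=> XcE PP PP' dE.
set Xc := map_mx toC X in XcE.
set P := spectralmx Xc in XcE PP PP' dE *.
set d := spectral_diag Xc in XcE dE *.
set uc := map_mx toC u.
set w := P *m uc.
have ucr : map_mx Num.Def.conjC uc^T = uc^T.
  by apply/matrixP => i j; rewrite !mxE conj_Creal ?complex_real.
have wT : map_mx Num.Def.conjC w^T = uc^T *m map_mx Num.Def.conjC P^T.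
  by rewrite /w trmx_mul map_mxM ucr.
have mapq : forall M : 'M[R]_n, toC ((u^T *m M *m u) 0 0) =
   (map_mx Num.Def.conjC w^T *m (P *m map_mx toC M *m map_mx Num.Def.conjC P^T) *m w) 0 0.
  move=> M; rewrite wT /w !mulmxA -[uc^T *m _ *m P]mulmxA PP' mulmx1.
  rewrite -(mulmxA _ (map_mx _ P^T) P) PP' mulmx1.
  by rewrite map_trmx -!map_mxM [in RHS]mxE.
have diagq : forall g : 'rV[C]_n, (map_mx Num.Def.conjC w^T *m diag_mx g *m w) 0 0 =
    \sum_j Num.Def.conjC (w j 0) * g 0 j * w j 0.
  by move=> g; rewrite mul_mx_diag mxE; apply: eq_bigr => j _; rewrite !mxE.
set g := \row_j (1 - toC 2^-1 * d 0 j - toC 2^-1 * d 0 j ^+ 2).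
have DE : P *m map_mx toC (1%:M - 2^-1 *: X - 2^-1 *: (X *m X)) *m map_mx Num.Def.conjC P^T
    = diag_mx g.
  rewrite !map_mxD !map_mxN !map_mxZ map_mxM map_mx1 -/Xc.
  rewrite !mulmxDr !mulmxDl !mulmxN !mulNmx -!scalemxAr -!scalemxAl mulmx1 PP.
  have h1 : P *m Xc *m map_mx Num.Def.conjC P^T = diag_mx d.
    by rewrite XcE !mulmxA PP mul1mx -mulmxA PP mulmx1.
  have h2 : P *m (Xc *m Xc) *m map_mx Num.Def.conjC P^T = diag_mx d *m diag_mx d.
    by rewrite -h1 !mulmxA -[P *m Xc *m _ *m P]mulmxA PP' mulmx1.
  rewrite h1 h2 mul_diag_mx; apply/matrixP => i j; rewrite !mxE.
  by case: eqP => [->|]; rewrite ?mulr1n ?mulr0n ?mulr0 ?subr0 ?expr2.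
have q1 : toC ((u^T *m u) 0 0) = \sum_j Num.Def.conjC (w j 0) * w j 0.
  have := mapq 1%:M; rewrite mulmx1 map_mx1 mulmx1 PP => ->.
  by rewrite mulmx1 mxE; apply: eq_bigr => j _; rewrite !mxE.
have qB := mapq (1%:M - 2^-1 *: X - 2^-1 *: (X *m X)).
rewrite DE diagq in qB.
have key : forall j, Num.Def.conjC (w j 0) * g 0 j * w j 0 =
   toC (1 - 2^-1 * complex.Re (d 0 j) - 2^-1 * complex.Re (d 0 j) ^+ 2) * (Num.Def.conjC (w j 0) * w j 0).
  move=> j; have [dx _] := dE j; move: dx; set x := complex.Re (d 0 j) => dx.
  rewrite [g 0 j]mxE dx !rmorphB rmorph1 !rmorphM expr2 /=.
  ring.
have pos : forall j, 0 <= Num.Def.conjC (w j 0) * w j 0.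
  by move=> j; rewrite mulrC mul_conjC_ge0.
split; rewrite -lecR -/(real_complex R _) ?rmorphM /= q1 qB.
- rewrite mulr_sumr; apply: ler_sum => j _; rewrite key ler_wpM2r // lecR.
  have [_ h] := dE j; move: h; set x := complex.Re (d 0 j) => h.
  have h1 : x <= r by apply: le_trans h; apply: ler_norm.
  have h2 : - r <= x by rewrite lerNl; apply: le_trans h; rewrite -normrN; apply: ler_norm.
  nra.
- rewrite mulr_sumr; apply: ler_sum => j _; rewrite key ler_wpM2r // lecR.
  have [_ h] := dE j; move: h; set x := complex.Re (d 0 j) => h.
  have h1 : x <= r by apply: le_trans h; apply: ler_norm.
  have h2 : - r <= x by rewrite lerNl; apply: le_trans h; rewrite -normrN; apply: ler_norm.
  nra.
Qed.
End S.

Lemma mx00B (R : realType) (A B : 'M[R]_1) : (A - B) 0 0 = A 0 0 - B 0 0.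
Proof. by rewrite !mxE. Qed.
Lemma mx00Z (R : realType) a (A : 'M[R]_1) : (a *: A) 0 0 = a * A 0 0.
Proof. by rewrite !mxE. Qed.

Theorem mainTheorem8 (R : realType) (n : nat) (X Xt : 'M[R]_n) (eps lam : R) :
  symmetric_mx X -> symmetric_mx Xt ->
  nonneg_mx X -> nonneg_mx Xt ->
  loewner_ge 1%:M X -> loewner_ge 1%:M Xt ->
  approx_eps eps (1%:M - Xt) (1%:M - 2^-1 *: X - 2^-1 *: (X *m X)) ->
  spectral_radius_le X (1 - lam) ->
  forall mu : R, eigenvalue Xt mu ->
    1 - 2^-1 * (3 - lam) * expR eps <= mu /\
    mu <= 1 - 2^-1 * (3 * lam - lam ^+ 2) * expR (- eps).
Proof.
move=> Xs Xts _ _ _ _ [H1 H2] Xr mu /eigenvalueP [v vXt v0].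
set B := 1%:M - 2^-1 *: X - 2^-1 *: (X *m X) in H1 H2.
have [c1 c2] := @quad_bound R n X (1 - lam) v^T Xs Xr.
rewrite trmxK -/B in c1 c2.
set N := (v *m v^T) 0 0 in c1 c2.
set Q := (v *m B *m v^T) 0 0 in c1 c2.
have qA : (v *m (1%:M - Xt) *m v^T) 0 0 = (1 - mu) * N.
  by rewrite mulmxBr mulmx1 vXt -{1}[v]scale1r -scalerBl -scalemxAl mx00Z.
have h1 := H1 v^T; rewrite trmxK mulmxBr mulmxBl mx00B -scalemxAr -scalemxAl mx00Z qA -/Q in h1.
have h2 := H2 v^T; rewrite trmxK mulmxBr mulmxBl mx00B -scalemxAr -scalemxAl mx00Z qA -/Q in h2.
rewrite subr_ge0 in h1. rewrite subr_ge0 in h2.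
have Npos : 0 < N.
  have NE : N = \sum_j v 0 j * v 0 j by rewrite /N mxE; apply: eq_bigr => j _; rewrite mxE.
  have sq : forall j, 0 <= v 0 j * v 0 j by move=> j; rewrite -expr2 sqr_ge0.
  have N0 : 0 <= N by rewrite NE; apply: sumr_ge0 => j _; apply: sq.
  rewrite lt_neqAle N0 andbT; apply/negP => /eqP /esym N00.
  move: NE; rewrite N00 => /esym /psumr_eq0P H.
  have : v = 0.
    apply/rowP => j; rewrite mxE.
    by have /eqP := H (fun i _ => sq i) j isT; rewrite mulf_eq0 orbb => /eqP.
  by move/eqP; rewrite (negPf v0).
have ea := expR_gt0 eps; have eb := expR_gt0 (- eps).
have ab : expR eps * expR (- eps) = 1 by rewrite -expRD subrr expR0.
split.
- have k1 : expR (- eps) * (1 - mu) <= 1 + 2^-1 * (1 - lam).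
    rewrite -(ler_pM2r Npos); apply: le_trans c2; rewrite -mulrA; exact: h2.
  have k2 := ler_wpM2l (ltW ea) k1; rewrite mulrA ab mul1r in k2.
  lra.
- have k1 : 1 - 2^-1 * (1 - lam) - 2^-1 * (1 - lam) ^+ 2 <= expR eps * (1 - mu).
    rewrite -(ler_pM2r Npos); apply: le_trans c1 _; rewrite -mulrA; exact: h1.
  have ab' : expR (- eps) * expR eps = 1 by rewrite mulrC.
  have k2 := ler_wpM2l (ltW eb) k1; rewrite [X in _ <= X]mulrA ab' mul1r in k2.
  nra.
Qed.
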